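(* Let $G$ be a group generated by $x_1,\dots,x_n$, with finite commutator subgroup $C=[G,G]$, such that $G/C$ is free abelian of rank $n$ with basis the images of $x_1,\dots,x_n$. Let $P=X\cap\mathcal C_G(C)$ with $X=\{g_{\mathbf m}\in T: c_{\,x_1^{m_1}\cdots x_{k-1}^{m_{k-1}},\,x_k}=e \text{ for all } k\}$, and $Q=P\cap Z$ with $Z$ the center of $G$. Then $l_{\mathbf r,q}=e$ for every $\mathbf r\in\mathbb Z^n$ and every $q\in Q$.
   Context: Notation: $\bar g=g^{-1}$, $c_{gh}=\bar g\,\bar h\,g\,h$; $\mathcal C_G(C)$ is the centralizer of $C$ in $G$. For $\mathbf r\in\mathbb Z^n$, $g_{\mathbf r}=x_1^{r_1}\cdots x_n^{r_n}$, $T=\{g_{\mathbf r}\}$. Every $g\in G$ decomposes uniquely as $g=g_{\mathbf r}c$ with $c\in C$; write $\mathbf r_g=\mathbf r$. The link is $l_{\mathbf r,\lambda}=\overline{g_{\mathbf r+\mathbf r_\lambda}}\,\lambda\,g_{\mathbf r}\in C$. *)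

(* Defs.v *)
From mathcomp Require Import all_boot all_algebra.
From Stdlib Require Lists.List.
Set Implicit Arguments. Unset Strict Implicit. Unset Printing Implicit Defensive.
Import GRing.Theory.
Local Open Scope ring_scope.

Section GroupDefs.
Variables (G : Type) (mul : G -> G -> G) (inv : G -> G) (e : G).

Definition is_group : Prop :=
  [/\ forall a b c, mul a (mul b c) = mul (mul a b) c,
      forall a, mul e a = a,
      forall a, mul a e = a,
      forall a, mul (inv a) a = e
    & forall a, mul a (inv a) = e].

Definition zpow (g : G) (z : int) : G :=
  match z with
  | Posz k => iter k (mul g) e
  | Negz k => iter k.+1 (mul (inv g)) e
  end.

Definition gprod (s : seq G) : G := foldr mul e s.

Definition comm (g h : G) : G := mul (inv g) (mul (inv h) (mul g h)).

Inductive gen_by (S : G -> Prop) : G -> Prop :=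
  | gen_e : gen_by S e
  | gen_in g : S g -> gen_by S g
  | gen_mul g h : gen_by S g -> gen_by S h -> gen_by S (mul g h)
  | gen_inv g : gen_by S g -> gen_by S (inv g).

Definition in_comm_subgroup (g : G) : Prop :=
  gen_by (fun c => exists a b, c = comm a b) g.

Definition finite_pred (S : G -> Prop) : Prop :=
  exists s : seq G, forall g, S g -> Stdlib.Lists.List.In g s.

Definition in_centralizer (S : G -> Prop) (g : G) : Prop :=
  forall c, S c -> mul g c = mul c g.

Definition in_center (g : G) : Prop := forall h, mul g h = mul h g.

Variables (n : nat) (x : 'I_n -> G).

Definition g_vec (r : 'I_n -> int) : G :=
  gprod [seq zpow (x i) (r i) | i <- enum 'I_n].

(* x_1^{m_1} ... x_{k-1}^{m_{k-1}} (indices < k, 0-based) *)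
Definition g_prefix (m : 'I_n -> int) (k : 'I_n) : G :=
  gprod [seq zpow (x i) (m i) | i <- enum 'I_n & (nat_of_ord i < nat_of_ord k)%N].

Definition decomp (g : G) (r : 'I_n -> int) : Prop :=
  exists c, in_comm_subgroup c /\ g = mul (g_vec r) c.

Definition in_X (g : G) : Prop :=
  exists m : 'I_n -> int, g = g_vec m /\
    forall k : 'I_n, comm (g_prefix m k) (x k) = e.

Definition in_P (g : G) : Prop := in_X g /\ in_centralizer in_comm_subgroup g.

Definition in_Q (g : G) : Prop := in_P g /\ in_center g.

Definition link (r rl : 'I_n -> int) (lam : G) : G :=
  mul (inv (g_vec (fun i => r i + rl i))) (mul lam (g_vec r)).

End GroupDefs.

(* Main.v *)
Require Import Defs.
From mathcomp Require Import all_boot all_algebra.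
Import GRing.Theory.
Local Open Scope ring_scope.

Section Aux.
Variables (G : Type) (mul : G -> G -> G) (inv : G -> G) (e : G).
Hypothesis hG : is_group mul inv e.

Lemma mulA a b c : mul a (mul b c) = mul (mul a b) c. Proof. by case: hG. Qed.
Lemma mul1g a : mul e a = a. Proof. by case: hG. Qed.
Lemma mulg1 a : mul a e = a. Proof. by case: hG. Qed.
Lemma mulVg a : mul (inv a) a = e. Proof. by case: hG. Qed.
Lemma mulgV a : mul a (inv a) = e. Proof. by case: hG. Qed.
Lemma mulKg a b : mul (inv a) (mul a b) = b. Proof. by rewrite mulA mulVg mul1g. Qed.
Lemma mulKVg a b : mul a (mul (inv a) b) = b. Proof. by rewrite mulA mulgV mul1g. Qed.
Lemma mulgK a b : mul (mul b a) (inv a) = b. Proof. by rewrite -mulA mulgV mulg1. Qed.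
Lemma mulgKV a b : mul (mul b (inv a)) a = b. Proof. by rewrite -mulA mulVg mulg1. Qed.
Lemma inv_uniq a b : mul a b = e -> b = inv a.
Proof. by move=> H; rewrite -(mulKg a b) H mulg1. Qed.
Lemma invMg a b : inv (mul a b) = mul (inv b) (inv a).
Proof.
by symmetry; apply: inv_uniq; rewrite -mulA (mulA b) mulgV mul1g mulgV.
Qed.
Lemma invgK a : inv (inv a) = a.
Proof. by symmetry; apply: inv_uniq; rewrite mulVg. Qed.

Lemma iter_comm a p : mul a p = mul p a ->
  forall k, mul (iter k (mul a) e) p = mul p (iter k (mul a) e).
Proof.
move=> H; elim=> [|k IH] /=; first by rewrite mul1g mulg1.
by rewrite -mulA IH mulA H -mulA.
Qed.

Lemma iter_self a k : mul a (iter k (mul a) e) = mul (iter k (mul a) e) a.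
Proof. by rewrite (@iter_comm a a (erefl _) k). Qed.

Notation zp := (zpow mul inv e).

Lemma zpow_succ g z : zp g (z + 1) = mul (zp g z) g.
Proof.
case: z => k.
  have -> : (Posz k + 1 = Posz k.+1)%R by rewrite -PoszD addn1.
  by rewrite /= iter_self.
case: k => [|k]; first by rewrite /= mulg1 mulVg.
have -> : Negz k.+1 + 1 = Negz k.
  by rewrite !NegzE -[(k.+2)%N]addn1 PoszD opprD addrNK.
by rewrite /= [in RHS](iter_self (inv g) k) mulA mulgKV.
Qed.

Lemma zpow_pred g z : zp g (z - 1) = mul (zp g z) (inv g).
Proof. by have := zpow_succ g (z - 1); rewrite subrK => ->; rewrite mulgK. Qed.

Lemma zpow_add g a b : zp g (a + b) = mul (zp g a) (zp g b).
Proof.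
case: b => k; elim: k => [|k IH].
- by rewrite addr0 /= mulg1.
- by rewrite -addn1 PoszD addrA !zpow_succ IH mulA.
- have -> : Negz 0 = -1 by [].
  by rewrite zpow_pred /= mulg1.
- have -> : Negz k.+1 = Negz k - 1.
    by rewrite !NegzE -addn1 PoszD opprD.
  by rewrite addrA !zpow_pred IH mulA.
Qed.

Lemma zpow_comm g p z : mul g p = mul p g -> mul (zp g z) p = mul p (zp g z).
Proof.
move=> H.
have H' : mul (inv g) p = mul p (inv g).
  rewrite -{1}(mulgK g (mul (inv g) p)) -(mulA (inv g) p g) -H.
  by rewrite (mulA (inv g)) mulVg mul1g.
case: z => k; first exact: (@iter_comm g p H k).
exact: (@iter_comm (inv g) p H' k.+1).
Qed.

Lemma comm_eq a b : comm mul inv a b = e -> mul a b = mul b a.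
Proof.
rewrite /comm => H.
have H1 : mul (inv b) (mul a b) = a by rewrite -[RHS]mulg1 -H mulKVg.
by rewrite -{1}(mulKVg b (mul a b)) H1.
Qed.

Lemma gprod_cat s t : gprod mul e (s ++ t) = mul (gprod mul e s) (gprod mul e t).
Proof. by elim: s => [|a s IH] /=; rewrite ?mul1g // IH mulA. Qed.

Lemma gprod_rcons s a : gprod mul e (rcons s a) = mul (gprod mul e s) a.
Proof. by rewrite -cats1 gprod_cat /= mulg1. Qed.

Lemma part1 n (x : 'I_n -> G) (m r : 'I_n -> int) :
  (forall k, comm mul inv (g_prefix mul inv e x m k) (x k) = e) ->
  g_vec mul inv e x (fun i => r i + m i) = mul (g_vec mul inv e x r) (g_vec mul inv e x m).
Proof.
move=> hX.
pose L j := [seq i <- enum 'I_n | (nat_of_ord i < j)%N].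
have Lfull : L n = enum 'I_n by apply/all_filterP/allP => i _; exact: ltn_ord.
have mv : forall j, map (@nat_of_ord n) (L j) = [seq v <- iota 0 n | (v < j)%N].
  move=> j; rewrite /L -val_enum_ord filter_map; congr map.
have fi : forall j, (j <= n)%N -> [seq v <- iota 0 n | (v < j)%N] = iota 0 j.
  move=> j hj; rewrite -(subnKC hj) iotaD filter_cat.
  have -> : [seq v <- iota 0 j | (v < j)%N] = iota 0 j.
    by apply/all_filterP/allP => v; rewrite mem_iota.
  rewrite (@eq_in_filter _ _ pred0) ?filter_pred0 ?cats0 // => v.
  by rewrite mem_iota add0n => /andP[/leq_gtF -> _].
have vi := inj_map (@ord_inj n).
have L0 : L 0%N = [::] by apply: vi; rewrite mv fi.
have LS : forall j (hj : (j < n)%N), L j.+1 = rcons (L j) (Ordinal hj).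
  move=> j hj; apply: vi; rewrite [LHS]mv fi // -cats1 map_cat mv (fi _ (ltnW hj)).
  by rewrite -addn1 iotaD.
have main : forall j, (j <= n)%N ->
  gprod mul e [seq zp (x i) (r i + m i) | i <- L j] =
  mul (gprod mul e [seq zp (x i) (r i) | i <- L j])
      (gprod mul e [seq zp (x i) (m i) | i <- L j]).
  elim=> [|j IH] hj; first by rewrite L0 /= mulg1.
  rewrite (LS j hj) !map_rcons !gprod_rcons (IH (ltnW hj)) zpow_add /=.
  have hc := @zpow_comm (x (Ordinal hj)) _ (r (Ordinal hj)) (esym (@comm_eq _ _ (hX (Ordinal hj)))).
  rewrite -!mulA; congr mul; rewrite !mulA; congr mul.
  exact: (esym hc).
have := main n (leqnn n); rewrite Lfull; exact.
Qed.

Notation C := (in_comm_subgroup mul inv e).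
Definition E a b := C (mul (inv a) b).

Lemma E_refl a : E a a. Proof. by rewrite /E mulVg; exact: gen_e. Qed.
Lemma E_eq a b : a = b -> E a b. Proof. by move=> ->; exact: E_refl. Qed.
Lemma E_trans a b c : E a b -> E b c -> E a c.
Proof. by move=> h1 h2; rewrite /E -(mulKVg b c) mulA; exact: gen_mul. Qed.
Lemma E_comm a b : E (mul a b) (mul b a).
Proof.
rewrite /E invMg -mulA; apply: gen_in; exists b, a; by [].
Qed.
Lemma C_conj c b : C c -> C (mul (inv b) (mul c b)).
Proof.
move=> hc; rewrite -(mulKVg c (mul (inv b) (mul c b))); apply: gen_mul => //.
apply: gen_in; exists c, b; by [].
Qed.
Lemma E_cong a a' b b' : E a a' -> E b b' -> E (mul a b) (mul a' b').
Proof.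
rewrite /E => h1 h2.
have -> : mul (inv (mul a b)) (mul a' b') =
  mul (mul (inv b) (mul (mul (inv a) a') b)) (mul (inv b) b').
  by rewrite -mulA -(mulA _ b) mulKVg -(mulA (inv a)) invMg -mulA.
by apply: gen_mul => //; exact: C_conj.
Qed.

Arguments E_trans {a b c}.
Arguments E_cong {a a' b b'}.

Lemma E_list (I : Type) (h f : I -> G) s :
  E (gprod mul e [seq mul (h i) (f i) | i <- s])
    (mul (gprod mul e [seq h i | i <- s]) (gprod mul e [seq f i | i <- s])).
Proof.
elim: s => [|i s IH] /=; first by rewrite mulg1; exact: E_refl.
apply: E_trans (E_cong (E_refl (mul (h i) (f i))) IH) _.
rewrite -!mulA; apply: E_cong; first exact: E_refl.
rewrite !mulA; apply: E_cong (E_refl _); exact: E_comm.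
Qed.

Lemma final_lemma (n : nat) (x : 'I_n -> G) :
  (forall r : 'I_n -> int,
      in_comm_subgroup mul inv e (g_vec mul inv e x r) -> forall i, r i = 0) ->
  forall q : G, in_Q mul inv e x q ->
  forall rq : 'I_n -> int, decomp mul inv e x q rq ->
  forall r : 'I_n -> int, link mul inv e x r rq q = e.
Proof.
move=> hind q [[[m [qm hX]] _] hcen] rq [c [hc hq]] r.
pose d := fun i => m i - rq i.
have gm : g_vec mul inv e x m =
  gprod mul e [seq mul (zp (x i) (rq i)) (zp (x i) (d i))
              | i <- enum 'I_n].
  rewrite /g_vec; congr gprod; apply: eq_map => i.
  by rewrite -zpow_add /d [rq i + _]addrC subrK.
have hE : E (g_vec mul inv e x m) (mul (g_vec mul inv e x rq) (g_vec mul inv e x d)).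
  by rewrite gm; exact: (E_list _ (fun i => zp (x i) (rq i)) (fun i => zp (x i) (d i)) (enum 'I_n)).
rewrite -qm hq /E invMg -mulA mulKg in hE.
have hd : in_comm_subgroup mul inv e (g_vec mul inv e x d).
  rewrite -(mulKVg c (g_vec mul inv e x d)).
  by apply: gen_mul.
have hrq : forall i, rq i = m i.
  move=> i; have := hind d hd i; rewrite /d => /eqP; rewrite subr_eq0 => /eqP.
  by move=> ->.
rewrite /link.
have -> : g_vec mul inv e x (fun i => r i + rq i) = g_vec mul inv e x (fun i => r i + m i).
  by rewrite /g_vec; congr gprod; apply: eq_map => i; rewrite hrq.
rewrite (@part1 n x m r hX) hcen qm; exact: mulVg.
Qed.

End Aux.

Theorem corollary6p2 (G : Type) (mul : G -> G -> G) (inv : G -> G) (e : G)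
  (n : nat) (x : 'I_n -> G) :
  is_group mul inv e ->
  (* G is generated by x_1, ..., x_n *)
  (forall g : G, gen_by mul inv e (fun y => exists i, y = x i) g) ->
  (* the commutator subgroup C is finite *)
  finite_pred (in_comm_subgroup mul inv e) ->
  (* G/C is free abelian with basis the images of the x_i:
     (generation is given above) the images are Z-linearly independent *)
  (forall r : 'I_n -> int,
      in_comm_subgroup mul inv e (g_vec mul inv e x r) -> forall i, r i = 0) ->
  forall q : G, in_Q mul inv e x q ->
  forall rq : 'I_n -> int, decomp mul inv e x q rq ->
  forall r : 'I_n -> int, link mul inv e x r rq q = e.
Proof.
move=> hG _ _; exact: (@final_lemma G mul inv e hG n x).
Qed.
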